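(* For a positive integer $n$, let $f(n)$ be the maximum value of $\operatorname{Re}\big(\sum_{\xi \in S} \xi\big)$ over all subsets $S$ of the set of $n$-th roots of unity. Then $f(n) \le n/3$ for all $n \ge 3$, and $\lim_{n \to \infty} \frac{f(n)}{n} = \frac{1}{\pi}$. *)

(* Defs.v *)
From mathcomp Require Import all_boot all_order all_algebra.
From mathcomp Require Import all_classical all_reals all_analysis.
From mathcomp Require Import complex.
Import Order.TTheory GRing.Theory Num.Theory.
Local Open Scope ring_scope.

Definition root_unity (R : realType) (n : nat) (k : 'I_n) : R[i] :=
  Complex (cos (2 * pi * k%:R / n%:R)) (sin (2 * pi * k%:R / n%:R)).

(* Subsets are indexed by subsets of 'I_n (the map k |-> root_unity n k is a
   bijection onto the n-th roots of unity). The empty set gives 0, so using 0 as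
   the neutral element of max does not change the value. *)
Definition f_roots (R : realType) (n : nat) : R :=
  \big[Order.max/0]_(S : {set 'I_n}) complex.Re (\sum_(k in S) root_unity R n k).

(* Main.v *)
Require Import Defs.
From mathcomp Require Import all_boot all_order all_algebra.
From mathcomp Require Import all_classical all_reals all_analysis.
From mathcomp Require Import complex.
From mathcomp Require Import ring lra zify.
Import Order.TTheory GRing.Theory Num.Theory.
Import numFieldNormedType.Exports.
Local Open Scope classical_set_scope.
Local Open Scope ring_scope.

Section S.
Variable R : realType.
Lemma mono0 (f df : R -> R) (x : R) : 0 <= x -> (forall y : R, is_derive y 1 f (df y)) ->
  (forall y : R, 0 <= y -> 0 <= df y) -> f 0 <= f x.
Proof.
move=> x0 fd dfp.
have cf : {within `[0, x], continuous f}.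
  apply: continuous_subspaceT => y.
  apply/differentiable_continuous/derivable1_diffP; exact: (@ex_derive _ _ _ _ _ _ _ (fd y)).
have [c cI E] := MVT_segment x0 (fun y _ => fd y) cf.
rewrite -subr_ge0 E mulr_ge0 ?subr0 //; apply: dfp.
by move: cI; rewrite in_itv /= => /andP[].
Qed.
Lemma T1 (x : R) : 0 <= x -> sin x <= x.
Proof.
move=> x0.
have : (id - sin : R -> R) 0 <= (id - sin : R -> R) x.
  apply: (@mono0 (id - sin : R -> R) (fun y => 1 - cos y)) => //.
by rewrite /= !fctE sin0 subr0 subr_ge0.
Qed.
Lemma T2 (x : R) : 0 <= x -> 1 - x ^+ 2 / 2 <= cos x.
Proof.
move=> x0.
have : (cos - cst 1 + (fun y => y ^+ 2 / 2) : R -> R) 0 <= (cos - cst 1 + (fun y => y ^+ 2 / 2) : R -> R) x.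
  apply: (@mono0 _ (fun y => - sin y + y)) => //.
    by move=> y; apply: is_derive_eq; rewrite /GRing.scale /=; field.
  by move=> y y0; rewrite addrC subr_ge0 T1.
rewrite /= !fctE cos0 expr0n /= mul0r => H. lra.
Qed.
Lemma T3 (x : R) : 0 <= x -> x - x ^+ 3 / 6 <= sin x.
Proof.
move=> x0.
have : (sin - id + (fun y => y ^+ 3 / 6) : R -> R) 0 <= (sin - id + (fun y => y ^+ 3 / 6) : R -> R) x.
  apply: (@mono0 _ (fun y => cos y - 1 + y ^+ 2 / 2)) => //.
    by move=> y; apply: is_derive_eq; rewrite /GRing.scale /=; field.
  by move=> y y0; have := T2 y y0; lra.
rewrite /= !fctE sin0 expr0n /= mul0r => H. lra.
Qed.
Lemma T4 (x : R) : 0 <= x -> cos x <= 1 - x ^+ 2 / 2 + x ^+ 4 / 24.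
Proof.
move=> x0.
have : (cst 1 - (fun y => y ^+ 2 / 2) + (fun y => y ^+ 4 / 24) - cos : R -> R) 0 <= (cst 1 - (fun y => y ^+ 2 / 2) + (fun y => y ^+ 4 / 24) - cos : R -> R) x.
  apply: (@mono0 _ (fun y => - y + y ^+ 3 / 6 + sin y)) => //.
    by move=> y; apply: is_derive_eq; rewrite /GRing.scale /=; field.
  by move=> y y0; have := T3 y y0; lra.
rewrite /= !fctE cos0 !expr0n /= !mul0r => H. lra.
Qed.
Lemma T5 (x : R) : 0 <= x -> sin x <= x - x ^+ 3 / 6 + x ^+ 5 / 120.
Proof.
move=> x0.
have : (id - (fun y => y ^+ 3 / 6) + (fun y => y ^+ 5 / 120) - sin : R -> R) 0 <= (id - (fun y => y ^+ 3 / 6) + (fun y => y ^+ 5 / 120) - sin : R -> R) x.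
  apply: (@mono0 _ (fun y => 1 - y ^+ 2 / 2 + y ^+ 4 / 24 - cos y)) => //.
    by move=> y; apply: is_derive_eq; rewrite /GRing.scale /=; field.
  by move=> y y0; have := T4 y y0; lra.
rewrite /= !fctE sin0 !expr0n /= !mul0r => H. lra.
Qed.
Lemma pi_bounds : 78 / 25 < (pi : R) < 16 / 5.
Proof.
have pi2 : (2 : R) <= pi := @pi_ge2 R.
apply/andP; split.
  have c : 0 < cos (39 / 25 : R).
    have -> : (39 / 25 : R) = (39 / 50) *+ 2 by rewrite mulr2n; field.
    rewrite cos_mulr2n cos2sin2.
    have h1 := T5 (39/50 : R) ltac:(lra); have h2 := T3 (39/50 : R) ltac:(lra).
    have h3 : sin (39/50 : R) < 7071/10000 by lra.
    have h4 : 0 <= sin (39/50 : R) by lra.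
    rewrite mulr2n; nra.
  have : cos (pi / 2) < cos (39 / 25 : R) by rewrite cos_pihalf.
  rewrite ltr_cos; first lra.
    by rewrite in_itv /=; apply/andP; split; lra.
  by rewrite in_itv /=; apply/andP; split; lra.
have c : cos (8 / 5 : R) < 0.
  have := T4 (8/5 : R); lra.
have : cos (8 / 5 : R) < cos (pi / 2) by rewrite cos_pihalf.
rewrite ltr_cos; first lra.
  by rewrite in_itv /=; apply/andP; split; lra.
by rewrite in_itv /=; apply/andP; split; lra.
Qed.
End S.

Section B.
Variable R : realType.
Definition cc (n k : nat) : R := cos (2 * pi * k%:R / n%:R).

Lemma Re_sum n (S : {set 'I_n}) :
  complex.Re (\sum_(k in S) root_unity R n k) = \sum_(k in S) cc n k.
Proof.
rewrite (big_morph (@complex.Re R) (id1 := 0) (op1 := +%R)) //.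
by case=> a b [c d].
Qed.

Lemma f_roots_E n : f_roots R n = \sum_(k < n) Num.max 0 (cc n k).
Proof.
rewrite /f_roots; apply/eqP; rewrite eq_le; apply/andP; split.
  apply: bigmax_le.
    by apply: sumr_ge0 => k _; rewrite le_max lexx.
  move=> S _; rewrite Re_sum [X in X <= _]big_mkcond /=.
  apply: ler_sum => k _; case: ifP => _.
    by rewrite le_max lexx orbT.
  by rewrite le_max lexx.
have H := le_bigmax (0:R) (fun S : {set 'I_n} => complex.Re (\sum_(k in S) root_unity R n k)) [set k : 'I_n | 0 < cc n k]%SET.
apply: le_trans H.
rewrite Re_sum [X in _ <= X]big_mkcond /=.
apply: ler_sum => k _; rewrite inE; case: ifP => h.
  by rewrite ge_max lexx ltW.
by rewrite ge_max lexx /= leNgt h.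
Qed.

Lemma cc_sym n k : (0 < n)%N -> (k <= n)%N -> cc n (n - k) = cc n k.
Proof.
move=> n0 kn; rewrite /cc natrB //.
have -> : 2 * pi * (n%:R - k%:R) / n%:R = pi *+ 2 - 2 * pi * k%:R / n%:R :> R.
  by rewrite mulr2n; field; rewrite pnatr_eq0 -lt0n.
by rewrite cosB cos2pi sin2pi mul1r mul0r addr0.
Qed.

Lemma cc_gt0 n k : (4 * k < n)%N -> 0 < cc n k.
Proof.
move=> h; have n0 : (0 < n)%N by lia.
have hk : (4 * k%:R < n%:R :> R) by rewrite -natrM ltr_nat.
have N0 : (0 < n%:R :> R) by rewrite ltr0n.
have K0 : (0 <= k%:R :> R) by [].
have p0 : (0 < pi :> R) := @pi_gt0 R.
rewrite /cc; set t := 2 * pi * k%:R / n%:R.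
have tN : t * n%:R = 2 * pi * k%:R by rewrite /t; field; rewrite pnatr_eq0 -lt0n.
apply: cos_gt0_pihalf; apply/andP; split; nra.
Qed.

Lemma cc_le0 n k : (0 < n)%N -> (n <= 4 * k)%N -> (4 * k <= 3 * n)%N -> cc n k <= 0.
Proof.
move=> n0 h1 h2.
have hk1 : (n%:R <= 4 * k%:R :> R) by rewrite -natrM ler_nat.
have hk2 : (4 * k%:R <= 3 * n%:R :> R) by rewrite -!natrM ler_nat.
have N0 : (0 < n%:R :> R) by rewrite ltr0n.
have p0 : (0 < pi :> R) := @pi_gt0 R.
rewrite /cc; set t := 2 * pi * k%:R / n%:R.
have tN : t * n%:R = 2 * pi * k%:R by rewrite /t; field; rewrite pnatr_eq0 -lt0n.
rewrite -(subrK pi t) cosDpi oppr_le0; apply: cos_ge0_pihalf.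
apply/andP; split; nra.
Qed.

Lemma g_split n k : (0 < k < n)%N -> Num.max 0 (cc n k) =
  (if (4 * k < n)%N then cc n k else 0) + (if (4 * (n - k) < n)%N then cc n k else 0).
Proof.
move=> /andP[k0 kn]; have n0 : (0 < n)%N by lia.
case: ifP => h1; case: ifP => h2.
- exfalso; lia.
- by rewrite addr0 max_r // ltW // cc_gt0.
- rewrite add0r max_r //; have := @cc_gt0 n (n - k) h2; rewrite cc_sym //; [exact: ltW | lia].
- rewrite addr0 max_l //; apply: cc_le0 => //; lia.
Qed.

Lemma sum_pos n m : (4 * m < n)%N -> (n <= 4 * m + 4)%N ->
  \sum_(k < n) Num.max 0 (cc n k) = 1 + 2 * \sum_(1 <= k < m.+1) cc n k.
Proof.
move=> hm1 hm2; have n0 : (0 < n)%N by lia.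
rewrite -(big_mkord xpredT (fun k => Num.max 0 (cc n k))) (big_ltn n0).
have -> : cc n 0 = 1 by rewrite /cc mulr0 mul0r cos0.
rewrite max_r // (eq_big_nat _ _ (@g_split n)) big_split /=.
rewrite [X in _ + (_ + X)]big_nat_rev /=.
have -> : \sum_(1 <= i < n) (if (4 * (n - (1 + n - i.+1)) < n)%N then cc n (1 + n - i.+1) else 0)
   = \sum_(1 <= i < n) (if (4 * i < n)%N then cc n i else 0).
  apply: eq_big_nat => i /andP[i1 i2].
  have -> : (1 + n - i.+1 = n - i)%N by lia.
  have -> : (n - (n - i) = i)%N by lia.
  by rewrite cc_sym //; lia.
rewrite (big_cat_nat (n := m.+1)) //=; last by lia.
have -> : \sum_(m.+1 <= i < n) (if (4 * i < n)%N then cc n i else 0) = 0.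
  apply: big1_seq => i /andP[_]; rewrite mem_index_iota => /andP[i1 i2].
  by case: ifP => //; lia.
rewrite !addr0.
rewrite [X in 1 + (X + X)](eq_big_nat _ _ (F2 := fun i => cc n i)); last first.
  by move=> i /andP[i1 i2]; case: ifP => //; lia.
by rewrite mulr2n mulrDl mul1r.
Qed.

Lemma dirichlet (x : R) m :
  sin x * (1 + 2 * \sum_(1 <= k < m.+1) cos (2 * k%:R * x)) = sin ((2 * m%:R + 1) * x).
Proof.
elim: m => [|m IH].
  by rewrite big_geq // mulr0 addr0 mulr1 add0r mul1r.
rewrite big_nat_recr //=.
set S := \sum_(1 <= k < m.+1) _.
transitivity (sin x * (1 + 2 * S) + 2 * sin x * cos (2 * m.+1%:R * x)); first by ring.
rewrite IH.
have -> : (2 * m%:R + 1) * x = 2 * m.+1%:R * x - x by rewrite -addn1 natrD; ring.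
have -> : (2 * m.+1%:R + 1) * x = 2 * m.+1%:R * x + x by ring.
rewrite sinB sinD; ring.
Qed.

Lemma cc_alt n k : (0 < n)%N -> cc n k = cos (2 * k%:R * (pi / n%:R)).
Proof. by move=> n0; rewrite /cc; congr cos; field; rewrite pnatr_eq0 -lt0n. Qed.

End B.

Section C.
Variable R : realType.

Lemma F_sum n : (0 < n)%N -> f_roots R n =
  1 + 2 * \sum_(1 <= k < ((n - 1) %/ 4).+1) cos (2 * k%:R * (pi / n%:R)).
Proof.
move=> n0; rewrite f_roots_E (@sum_pos R n ((n - 1) %/ 4)); [|lia|lia].
by congr (1 + 2 * _); apply: eq_bigr => k _; rewrite cc_alt.
Qed.

Lemma F_ge0 n : 0 <= f_roots R n.
Proof. by rewrite f_roots_E; apply: sumr_ge0 => k _; rewrite le_max lexx. Qed.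

Lemma F_sin n : (0 < n)%N -> f_roots R n * sin (pi / n%:R) =
  cos ((2 * ((n - 1) %/ 4)%:R + 1) * (pi / n%:R) - pi / 2).
Proof. by move=> n0; rewrite F_sum // mulrC dirichlet -sinDpihalf subrK. Qed.

Lemma delta_bd n : (0 < n)%N ->
  ((2 * ((n - 1) %/ 4)%:R + 1) * (pi / n%:R) - pi / 2) ^+ 2 <= (pi / n%:R) ^+ 2 :> R.
Proof.
move=> n0; set m := ((n - 1) %/ 4)%N.
have h1 : (4 * m + 1 <= n)%N by rewrite /m; lia.
have h2 : (n <= 4 * m + 4)%N by rewrite /m; lia.
have H1 : (4 * m%:R + 1 <= n%:R :> R) by move: h1; rewrite -(ler_nat R) natrD natrM; lra.
have H2 : (n%:R <= 4 * m%:R + 4 :> R) by move: h2; rewrite -(ler_nat R) natrD natrM; lra.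
set x := pi / n%:R; set w := (4 * m%:R + 2 - n%:R) / 2 : R.
have -> : (2 * m%:R + 1) * x - pi / 2 = x * w.
  by rewrite /x /w; field; rewrite pnatr_eq0 -lt0n.
have hw : w ^+ 2 <= 1 by rewrite /w; nra.
have hx : 0 <= x ^+ 2 by rewrite sqr_ge0.
rewrite exprMn; nra.
Qed.

End C.

Section D.
Variable R : realType.

Lemma cos_pi3_le : cos (pi / 3 : R) <= 1 / 2.
Proof.
have p0 : (0 < pi :> R) := @pi_gt0 R.
set a := pi / 3 : R.
have c0 : 0 < cos a by apply: cos_gt0_pihalf; rewrite /a; apply/andP; split; lra.
have e : cos (a *+ 2 + a) = -1 by rewrite -cospi; congr cos; rewrite /a mulr2n; field.
rewrite cosD cos_mulr2n sin_mulr2n in e.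
set c := cos a in e c0 *; set s := sin a in e.
have hs : s ^+ 2 = 1 - c ^+ 2 by rewrite /s /c sin2cos2.
have : (c + 1) * (2 * c - 1) ^+ 2 = ((c ^+ 2 *+ 2 - 1) * c - (c * s) *+ 2 * s) + 1 + 2 * c * (s ^+ 2 - (1 - c ^+ 2)).
  rewrite !mulr2n; ring.
rewrite e hs subrr mulr0 addr0 addNr => /eqP; rewrite mulf_eq0 => /orP[|].
  by move=> /eqP h; lra.
by rewrite expf_eq0 /= => /eqP h; lra.
Qed.

Lemma part1 n : (3 <= n)%N -> f_roots R n <= n%:R / 3.
Proof.
move=> n3; have n0 : (0 < n)%N by lia.
have /andP[pl pu] := @pi_bounds R.
have p0 : (0 < pi :> R) := @pi_gt0 R.
case: (leqP 7 n) => n7.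
  have N7 : (7 <= n%:R :> R) by rewrite (ler_nat R 7 n).
  pose x : R := pi / n%:R.
  have xN : x * n%:R = pi by rewrite /x; field; rewrite pnatr_eq0 -lt0n.
  have x0 : 0 < x by rewrite /x divr_gt0 // ltr0n.
  have xle : x <= 16 / 35 by nra.
  have hs := @T3 R x (ltW x0).
  have hF := @F_sin R n n0; rewrite -/x in hF.
  set d := (X in cos X) in hF.
  have hc := cos_le1 d.
  have F0 := F_ge0 R n.
  have e1 : n%:R * (x - x ^+ 3 / 6) = pi - pi * x ^+ 2 / 6 by rewrite -xN; ring.
  have x2 : x ^+ 2 <= (16 / 35) ^+ 2 by nra.
  have px2 : pi * x ^+ 2 <= 16 / 5 * (16 / 35) ^+ 2 by nra.
  have ns : 3 <= n%:R * sin x by nra.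
  nra.
have : n = 3%N \/ n = 4%N \/ n = 5%N \/ n = 6%N by lia.
case=> [->|[->|[->|->]]]; rewrite F_sum //.
- by rewrite big_geq //; lra.
- by rewrite big_geq //; lra.
- have -> : ((5 - 1) %/ 4 = 1)%N by [].
  rewrite big_nat1.
  set y := 2 * 1%:R * (pi / 5%:R) : R.
  have ey : y * 5 = 2 * pi by rewrite /y; field.
  have y0 : 0 <= y by lra.
  have := @T4 R y y0.
  have y1 : 156 / 125 <= y by lra.
  have y2 : y <= 32 / 25 by lra.
  have u1 : (156 / 125) ^+ 2 <= y ^+ 2 by nra.
  have u2 : y ^+ 2 <= (32 / 25) ^+ 2 by nra.
  have u3 : y ^+ 4 <= y ^+ 2 * (32 / 25) ^+ 2.
    have -> : y ^+ 4 = y ^+ 2 * y ^+ 2 by rewrite -exprD.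
    by apply: ler_wpM2l; rewrite ?sqr_ge0.
  lra.
- have -> : ((6 - 1) %/ 4 = 1)%N by [].
  rewrite big_nat1.
  have -> : 2 * 1%:R * (pi / 6%:R) = pi / 3 :> R by field.
  have := cos_pi3_le; lra.
Qed.

End D.

Section E.
Variable R : realType.

Lemma bounds2 n : (2 <= n)%N ->
  pi^-1 - n%:R^-1 <= f_roots R n / n%:R <= pi^-1 + 6 * n%:R^-1.
Proof.
move=> n2; have n0 : (0 < n)%N by lia.
have /andP[pl pu] := @pi_bounds R.
have p0 : (0 < pi :> R) := @pi_gt0 R.
have N2 : (2 <= n%:R :> R) by rewrite (ler_nat R 2 n).
pose x : R := pi / n%:R.
have xN : x * n%:R = pi by rewrite /x; field; rewrite pnatr_eq0 -lt0n.
have x0 : 0 < x by rewrite /x divr_gt0 // ltr0n.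
have xle : x <= 8 / 5 by nra.
have hs1 := @T1 R x (ltW x0).
have hs3 := @T3 R x (ltW x0).
have hF := @F_sin R n n0; rewrite -/x in hF.
have hd := @delta_bd R n n0; rewrite -/x in hd.
set d := (X in cos X) in hF hd.
have hc := cos_le1 d.
have hc2 : 1 - d ^+ 2 / 2 <= cos d.
  case: (lerP 0 d) => d0; first exact: T2.
  by rewrite -cosN -sqrrN; apply: T2; lra.
have F0 := F_ge0 R n.
set F := f_roots R n in hF F0 *.
set s := sin x in hs1 hs3 hF.
have ipp : pi^-1 * pi = 1 :> R by rewrite mulVf // gt_eqF.
have ip0 : 0 < pi^-1 :> R by rewrite invr_gt0.
move Hip : ((pi : R)^-1) ipp ip0 => ip ipp ip0.
have N0 : 0 < n%:R :> R by lra.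
have x2 : x ^+ 2 <= 64 / 25 by nra.
have s0 : 0 < s.
  have : 0 < x - x ^+ 3 / 6.
    have -> : x - x ^+ 3 / 6 = x * (1 - x ^+ 2 / 6) by ring.
    apply: mulr_gt0 => //; lra.
  lra.
have Ax : n%:R * ip * x = 1.
  transitivity (ip * (x * n%:R)); first by ring.
  by rewrite xN ipp.
move HA : (n%:R * ip) Ax => A Ax.
apply/andP; split.
  rewrite ler_pdivlMr //.
  have e : (ip - n%:R^-1) * n%:R = A - 1 by rewrite -HA; field; lra.
  rewrite e.
  have cd0 : 0 <= cos d by rewrite -hF; apply: mulr_ge0 => //; lra.
  have h1 : n%:R * cos d <= F * pi.
    rewrite -hF -xN.
    have : F * s <= F * x by apply: ler_wpM2l => //.
    nra.
  have h2 : cos d >= 1 - x ^+ 2 / 2 by have hd2 : d ^+ 2 <= x ^+ 2 := hd; lra.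
  (* F >= A * cos d >= A - A x^2/2 = A - x/2 *)
  have h3 : A * cos d <= F.
    have : A * cos d * pi <= F * pi.
      have -> : A * cos d * pi = n%:R * cos d * (ip * pi) by rewrite -HA; ring.
      by rewrite ipp mulr1.
    move=> h; nra.
  have h4 : A * (x ^+ 2 / 2) = x / 2.
    by transitivity ((A * x) * x / 2); [ring | rewrite Ax mul1r].
  nra.
rewrite ler_pdivrMr //.
have e : (ip + 6 * n%:R^-1) * n%:R = A + 6 by rewrite -HA; field; lra.
rewrite e.
have h1 : 1 <= (A + pi * x) * (x - x ^+ 3 / 6).
  have -> : (A + pi * x) * (x - x ^+ 3 / 6) = (A * x) * (1 - x ^+ 2 / 6) + pi * x ^+ 2 * (1 - x ^+ 2 / 6) by ring.
  rewrite Ax.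
  have : 0 <= x ^+ 2 * (pi * (1 - x ^+ 2 / 6) - 1 / 6).
    apply: mulr_ge0; first exact: sqr_ge0.
    nra.
  lra.
have h2 : 1 <= (A + pi * x) * s.
  apply: (le_trans h1); apply: ler_wpM2l => //.
  have : 0 <= A by rewrite -HA mulr_ge0 // ltW.
  have : 0 <= x ^+ 0 by [].
  nra.
have h3 : F <= A + pi * x.
  have : F * s <= (A + pi * x) * s by lra.
  by rewrite ler_pM2r.
nra.
Qed.

End E.

Section G.
Variable R : realType.
Lemma part2 : f_roots R n / n%:R @[n --> \oo] --> (pi : R)^-1.
Proof.
have hn : (fun n : nat => (n%:R : R)^-1) @ \oo --> 0.
  by rewrite -cvg_shiftS; exact: cvg_harmonic.
have hf : (fun n : nat => pi^-1 - (n%:R : R)^-1) @ \oo --> (pi : R)^-1.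
  rewrite -[X in _ --> X]subr0; apply: cvgB => //; exact: cvg_cst.
have hh : (fun n : nat => pi^-1 + 6 * (n%:R : R)^-1) @ \oo --> (pi : R)^-1.
  rewrite -[X in _ --> X]addr0 -(mulr0 6); apply: cvgD; first exact: cvg_cst.
  by apply: cvgM => //; exact: cvg_cst.
apply: (squeeze_cvgr _ hf hh).
by exists 2%N => // n /= n2; apply: bounds2.
Qed.
End G.

Theorem lemma3p8 (R : realType) :
  (forall n : nat, (3 <= n)%N -> f_roots R n <= n%:R / 3) /\
  (f_roots R n / n%:R @[n --> \oo] --> (pi : R)^-1).
Proof.
split; [move=> n; exact: part1 | exact: part2].
Qed.
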